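(* Let $(N,M,G,\rhd)$ be a lexicographic mixed instance, let $H\subseteq \bar C$ be a set of common chores, and let $B$ be a partial allocation of items of $M\setminus H$ that is Pareto optimal. Suppose that for every agent $i\in N$, every item of $H$ is $\rhd_i$-more important than every item of $G_i\cup B_i$. Then every (possibly partial) allocation $A$ obtained by extending $B$ by a serial dictatorship on the items of $H$, with an arbitrary ordering of agents and arbitrary quotas, is Pareto optimal.
   Context: A lexicographic mixed instance $(N,M,G,\rhd)$ consists of a set $N=[n]$ of agents, a finite set $M$ of items, for each agent $i$ a set $G_i\subseteq M$ of goods for $i$ (chores for $i$: $C_i=M\setminus G_i$), and for each $i$ a strict linear order $\rhd_i$ on $M$. Common chores: $\bar C=\bigcap_{i\in N}C_i$. For distinct $X,Y\subseteq M$, $X\succ_i Y$ iff the $\rhd_i$-most important item of $X\triangle Y$ lies in $(X\cap G_i)\cup(Y\cap C_i)$; $X\succeq_i Y$ means $X\succ_i Y$ or $X=Y$. A (partial) allocation is a tuple $(A_i)_{i\in N}$ of pairwise disjoint subsets of $M$. A partial allocation $A'$ Pareto dominates $A$ if $\bigcup_i A'_i=\bigcup_i A_i$, $A'_i\succeq_i A_i$ for all $i$, and $A'_i\succ_i A_i$ for some $i$; $A$ is Pareto optimal if no partial allocation Pareto dominates it. A serial dictatorship with ordering $\sigma=(\sigma_1,\dots,\sigma_n)$ of the agents and integer quotas $q=(q_1,\dots,q_n)$, started from a partial allocation, processes $\sigma_1,\sigma_2,\dots$ in turn; at agent $\sigma_t$'s step, if unallocated items (here: items of $H$) remain, $\sigma_t$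 adds to its bundle its $q_{\sigma_t}$ most preferred remaining items (the most important remaining goods for it, and then, if there are not enough goods, the least important remaining chores for it), or all remaining ones if fewer remain. *)

(* Defs.v *)
From mathcomp Require Import all_boot all_order.
Set Implicit Arguments. Unset Strict Implicit. Unset Printing Implicit Defensive.

(* Agents are 'I_n, items form a finite type M.
   G i : the goods of agent i (chores are the complement).
   imp i : rel M is agent i's importance order: imp i x y means x |>_i y. *)

Section Lex.
Variables (n : nat) (M : finType).
Variable G : 'I_n -> {set M}.
Variable imp : 'I_n -> rel M.

Definition strict_linear_order (r : rel M) : Prop :=
  [/\ irreflexive r, transitive r & forall x y, x != y -> r x y || r y x].

Definition symdiff (X Y : {set M}) : {set M} := (X :\: Y) :|: (Y :\: X).

Definition most_important (i : 'I_n) (S : {set M}) (x : M) : Prop :=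
  x \in S /\ forall y, y \in S -> y != x -> imp i x y.

Definition lex_pref (i : 'I_n) (X Y : {set M}) : Prop :=
  X != Y /\ exists x, most_important i (symdiff X Y) x /\
    ((x \in X /\ x \in G i) \/ (x \in Y /\ x \notin G i)).

Definition lex_wpref (i : 'I_n) (X Y : {set M}) : Prop :=
  lex_pref i X Y \/ X = Y.

Definition alloc := 'I_n -> {set M}.

Definition is_alloc (A : alloc) : Prop :=
  forall i j, i != j -> [disjoint A i & A j].

Definition allocated (A : alloc) : {set M} := \bigcup_(i < n) A i.

Definition pareto_dominates (A' A : alloc) : Prop :=
  allocated A' = allocated A /\ (forall i, lex_wpref i (A' i) (A i)) /\
  exists i, lex_pref i (A' i) (A i).

Definition pareto_optimal (A : alloc) : Prop :=
  is_alloc A /\ ~ exists A' : alloc, is_alloc A' /\ pareto_dominates A' A.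

Definition common_chores : {set M} := \bigcap_(i < n) ~: G i.

(* item x is preferred by agent i to item y as a single-item pick:
   goods before chores, goods by decreasing importance,
   chores by increasing importance. *)
Definition item_better (i : 'I_n) (x y : M) : bool :=
  if x \in G i then (y \notin G i) || imp i x y
  else (y \notin G i) && imp i y x.

Definition picks (i : 'I_n) (q : nat) (R S : {set M}) : Prop :=
  [/\ S \subset R, #|S| = minn q #|R| &
      forall x y, x \in S -> y \in R :\: S -> item_better i x y].

Definition remaining (H : {set M}) (A : alloc) : {set M} :=
  H :\: allocated A.

Inductive sd_run (H : {set M}) (q : 'I_n -> nat) :
    seq 'I_n -> alloc -> alloc -> Prop :=
| sd_nil A : sd_run H q [::] A A
| sd_cons i s A S A' :
    picks i (q i) (remaining H A) S ->
    sd_run H q s (fun j => if j == i then A j :|: S else A j) A' ->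
    sd_run H q (i :: s) A A'.

End Lex.

(* Main.v *)
Require Import Defs.
From mathcomp Require Import all_boot all_order.

Section Proofs.
Variables (n : nat) (M : finType) (G : 'I_n -> {set M}) (imp : 'I_n -> rel M).
Hypothesis Himp : forall i, strict_linear_order (imp i).

Lemma imp_asym i x y : imp i x y -> imp i y x -> False.
Proof.
case: (Himp i) => irr tr _ h1 h2.
by have := tr _ _ _ h1 h2; rewrite irr.
Qed.

Lemma disjUl (A B C : {set M}) :
  [disjoint A :|: B & C] = [disjoint A & C] && [disjoint B & C].
Proof. by rewrite -!setI_eq0 setIUl setU_eq0. Qed.

Lemma symdiffU (X Y T : {set M}) : [disjoint X & T] -> [disjoint Y & T] ->
  symdiff (X :|: T) (Y :|: T) = symdiff X Y.
Proof.
move=> dX dY; apply/setP=> x; rewrite /symdiff !inE.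
case xT: (x \in T).
  by rewrite (disjointFl dX xT) (disjointFl dY xT).
by rewrite !orbF.
Qed.

Lemma lex_pref_cancel i (X Y T : {set M}) : [disjoint X & T] -> [disjoint Y & T] ->
  lex_pref G imp i (X :|: T) (Y :|: T) -> lex_pref G imp i X Y.
Proof.
move=> dX dY [neq [x [[xin xmax] hx]]].
rewrite symdiffU // in xin xmax.
have xT : x \notin T.
  apply/negP=> xT; move: xin; rewrite /symdiff !inE.
  by rewrite (disjointFl dX xT) (disjointFl dY xT).
split.
  by apply: contra neq => /eqP ->.
exists x; split; first by split.
by move: hx; rewrite !inE (negbTE xT) !orbF.
Qed.

Lemma setU_cancel (X Y T : {set M}) : [disjoint X & T] -> [disjoint Y & T] ->
  X :|: T = Y :|: T -> X = Y.
Proof.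
move=> dX dY e; apply/setP=> x; have := congr1 (fun Z : {set M} => x \in Z) e; rewrite /= !inE.
case xT: (x \in T); last by rewrite !orbF.
by rewrite (disjointFl dX xT) (disjointFl dY xT).
Qed.

Lemma wpref_cancel i (X Y T : {set M}) : [disjoint X & T] -> [disjoint Y & T] ->
  lex_wpref G imp i (X :|: T) (Y :|: T) -> lex_wpref G imp i X Y.
Proof.
move=> dX dY [h|e]; [left; exact: lex_pref_cancel h | right; exact: setU_cancel e].
Qed.

Lemma cc_notG (x : M) j : x \in common_chores G -> x \notin G j.
Proof. by move/bigcapP => /(_ j isT); rewrite inE. Qed.

Lemma allocated_upd (B : alloc n M) i S :
  allocated (fun j => if j == i then B j :|: S else B j) = allocated B :|: S.
Proof.
apply/setP=> x; rewrite !inE; apply/bigcupP/idP.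
  case=> j _; case: eqP => _; last by move=> xB; apply/orP; left; apply/bigcupP; exists j.
  by rewrite inE => /orP [xB|->]; rewrite ?orbT //; apply/orP; left; apply/bigcupP; exists j.
case/orP => [/bigcupP [j _ xB]|xS].
  exists j => //; case: eqP => _ //; by rewrite inE xB.
by exists i => //; rewrite eqxx inE xS orbT.
Qed.

Lemma step (H : {set M}) (B : alloc n M) i (S : {set M}) :
  H \subset common_chores G ->
  (forall j, [disjoint B j & H]) ->
  pareto_optimal G imp B ->
  (forall j x y, x \in H -> y \in G j :|: B j -> imp j x y) ->
  S \subset H ->
  pareto_optimal G imp (fun j => if j == i then B j :|: S else B j).
Proof.
move=> HC HB [Balloc BPO] Himportant SH.
set B1 := fun j => _.
have HnB : forall x, x \in H -> x \notin allocated B.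
  move=> x xH; apply/bigcupP => [[j _ xB]].
  by rewrite (disjointFr (HB j) xB) in xH.
split.
  move=> j k jk; rewrite /B1.
  have dS : forall l, [disjoint S & B l].
    move=> l; apply: (disjointWl SH); rewrite disjoint_sym; exact: HB.
  case: (eqVneq j i) => [ji|ji]; case: (eqVneq k i) => [ki|ki].
  - by rewrite ji ki eqxx in jk.
  - by rewrite disjUl Balloc ?dS // -ji.
  - by rewrite disjoint_sym disjUl dS disjoint_sym Balloc // -ki eq_sym.
  - exact: Balloc.
move=> [A' [A'alloc [Hall [Hw [i0 Hi0]]]]].
have C1 : forall j, j != i -> forall h, h \in H -> h \notin A' j.
  move=> j ji h hH; apply/negP => hA.
  have B1j : B1 j = B j by rewrite /B1 (negbTE ji).
  have hB : h \notin B j by rewrite (disjointFl (HB j) hH).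
  case: (Hw j) => [[_ [x [[xin xmax] hx]]]|eqA]; last first.
    by move: hA; rewrite eqA B1j (negbTE hB).
  rewrite B1j in xin xmax hx.
  have hsd : h \in symdiff (A' j) (B j) by rewrite /symdiff !inE hA hB.
  have xGB : x \in G j :|: B j.
    by rewrite inE; case: hx => [[_ ->]|[-> _]]; rewrite ?orbT.
  case: (eqVneq h x) => [hx'|hx'].
    rewrite -hx' in hx; case: hx => [[_ hG]|[hB' _]].
      by move: (@cc_notG h j (subsetP HC _ hH)); rewrite hG.
    by rewrite hB' in hB.
  exact: imp_asym (xmax _ hsd hx') (Himportant _ _ _ hH xGB).
have HallA' : allocated A' = allocated B :|: S by rewrite Hall allocated_upd.
have C2 : A' i :&: H = S.
  apply/setP=> x; rewrite inE; apply/andP/idP.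
    case=> xA xH; have : x \in allocated A' by apply/bigcupP; exists i.
    by rewrite HallA' inE (negbTE (HnB _ xH)).
  move=> xS; have xH := subsetP SH _ xS.
  have : x \in allocated A' by rewrite HallA' inE xS orbT.
  case/bigcupP=> k _ xA; split=> //.
  case: (eqVneq k i) => [<-//|ki]; by rewrite (negbTE (C1 k ki x xH)) in xA.
set B' : alloc n M := fun j => A' j :\: H.
have A'dec : forall j, A' j = B' j :|: (if j == i then S else set0).
  move=> j; rewrite /B'; case: eqP => [->|/eqP ji].
    by rewrite -C2 setUC setID.
  rewrite setU0; apply/setP=> x; rewrite !inE.
  case xH: (x \in H) => //=.
  by rewrite (negbTE (C1 j ji x xH)).
have B1dec : forall j, B1 j = B j :|: (if j == i then S else set0).
  by move=> j; rewrite /B1; case: eqP; rewrite ?setU0.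
have dB'T : forall j, [disjoint B' j & (if j == i then S else set0)].
  move=> j; case: eqP => _; last by rewrite -setI_eq0 setI0.
  rewrite disjoint_sym; apply: (disjointWl SH); rewrite /B'.
  rewrite -setI_eq0; apply/eqP/setP=> x; rewrite !inE; by case: (x \in H); rewrite ?andbF.
have dBT : forall j, [disjoint B j & (if j == i then S else set0)].
  move=> j; case: eqP => _; last by rewrite -setI_eq0 setI0.
  rewrite disjoint_sym; apply: (disjointWl SH).
  by rewrite disjoint_sym.
apply: BPO; exists B'; split.
  move=> j k jk; rewrite /B'.
  exact: disjointW (subsetDl _ _) (subsetDl _ _) (A'alloc j k jk).
split.
  have -> : allocated B' = allocated A' :\: H.
    apply/setP=> x; rewrite inE; apply/bigcupP/andP.
      by case=> j _; rewrite inE => /andP [xH xA]; split=> //; apply/bigcupP; exists j.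
    by case=> xH /bigcupP [j _ xA]; exists j => //; rewrite inE xH.
  rewrite HallA'; apply/setP=> x; rewrite !inE.
  case xH: (x \in H) => /=.
    by apply/esym/negbTE; apply: HnB.
  case xS: (x \in S); last by rewrite orbF.
  by rewrite (subsetP SH _ xS) in xH.
split.
  move=> j; have := Hw j; rewrite A'dec B1dec; exact: wpref_cancel.
exists i0; move: Hi0; rewrite A'dec B1dec; exact: lex_pref_cancel.
Qed.
Lemma run_po H0 q s (A0 A : alloc n M) :
  sd_run G imp H0 q s A0 A -> H0 \subset common_chores G ->
  pareto_optimal G imp A0 ->
  (forall j x y, x \in remaining H0 A0 -> y \in G j :|: A0 j -> imp j x y) ->
  pareto_optimal G imp A.
Proof.
elim=> {s A0 A} [A0|i s A0 S A hpick hrun IH] HC PO0 Hi0 //.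
case: hpick => SR _ Sbest.
have RC : remaining H0 A0 \subset common_chores G.
  by apply: subset_trans HC; exact: subsetDl.
apply: IH => //.
  apply: (@step (remaining H0 A0)) => //.
  move=> j; rewrite /remaining; rewrite -setI_eq0; apply/eqP/setP=> x; rewrite !inE.
  case xA: (x \in A0 j) => //=.
  have -> : x \in allocated A0 by apply/bigcupP; exists j.
  by [].
move=> j x y; rewrite /remaining allocated_upd => xR yGA.
have xR0 : x \in remaining H0 A0.
  by move: xR; rewrite /remaining !in_setD in_setU negb_or => /andP [/andP [-> _] ->].
case: (eqVneq j i) => [ji|ji]; last by move: yGA; rewrite (negbTE ji); exact: Hi0.
move: yGA; rewrite ji eqxx !in_setU => /orP [yG|/orP [yA|yS]].
- by apply: Hi0 => //; rewrite inE yG.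
- by apply: Hi0 => //; rewrite inE yA orbT.
have xS : x \notin S by apply/negP => xS'; move: xR; rewrite !inE xS' orbT.
have := Sbest y x yS; rewrite in_setD xS xR0 => /(_ isT).
rewrite /item_better (negbTE (@cc_notG y i (subsetP RC _ (subsetP SR _ yS)))).
by case/andP.
Qed.
End Proofs.

Theorem lemma1 (n : nat) (M : finType) (G : 'I_n -> {set M})
  (imp : 'I_n -> rel M)
  (Himp : forall i, strict_linear_order (imp i))
  (H : {set M}) (HC : H \subset common_chores G)
  (B : alloc n M)
  (HB : forall i, [disjoint B i & H])
  (HBpo : pareto_optimal G imp B)
  (Himportant : forall i x y, x \in H -> y \in G i :|: B i -> imp i x y)
  (sigma : seq 'I_n) (Hsigma : perm_eq sigma (enum 'I_n))
  (q : 'I_n -> nat) (A : alloc n M) :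
  sd_run G imp H q sigma B A -> pareto_optimal G imp A.
Proof.
move=> hrun; apply: (@run_po n M G imp Himp H q sigma B A hrun HC HBpo).
move=> j x y; rewrite /remaining inE => /andP [_ xH]; exact: Himportant.
Qed.
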